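(* Let $\theta\in[0,1]$ and $\Delta t,\Delta x>0$ satisfy $\Delta t(1-2\theta)\le\frac{\Delta x^3}{4}$. Then for every sequence $a\in\ell^2_\Delta(\mathbb Z)$, $$\|\mathcal A_{-(1-\theta)}a\|^2_{\ell^2_\Delta}\le\|\mathcal A_\theta a\|^2_{\ell^2_\Delta}.$$
   Context: For a sequence $a=(a_j)_{j\in\mathbb Z}$: $D_+(a)_j=(a_{j+1}-a_j)/\Delta x$, $D_-(a)_j=(a_j-a_{j-1})/\Delta x$; $\|a\|_{\ell^2_\Delta}=(\Delta x\sum_j a_j^2)^{1/2}$. For $\alpha\in\mathbb R$, $\mathcal A_\alpha=I+\alpha\Delta tD_+D_+D_-$; thus $\mathcal A_{-(1-\theta)}=I-(1-\theta)\Delta tD_+D_+D_-$. *)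

(* Defs.v *)
From Stdlib Require Import Reals ZArith Lra.
From Coquelicot Require Import Coquelicot.
Open Scope R_scope.

Definition seqZ := Z -> R.

Definition Dp (dx : R) (a : seqZ) : seqZ := fun j => (a (j + 1)%Z - a j) / dx.
Definition Dm (dx : R) (a : seqZ) : seqZ := fun j => (a j - a (j - 1)%Z) / dx.

Definition Aop (alpha dt dx : R) (a : seqZ) : seqZ :=
  fun j => a j + alpha * dt * Dp dx (Dp dx (Dm dx a)) j.

(* Sum over Z split into the nonnegative indices j = n and negative indices j = -n-1 *)
Definition in_l2 (a : seqZ) : Prop :=
  ex_series (fun n : nat => (a (Z.of_nat n)) ^ 2) /\
  ex_series (fun n : nat => (a (- Z.of_nat n - 1)%Z) ^ 2).

Definition sumZ (f : seqZ) : R :=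
  Series (fun n : nat => f (Z.of_nat n)) + Series (fun n : nat => f (- Z.of_nat n - 1)%Z).

Definition norm2_l2 (dx : R) (a : seqZ) : R := dx * sumZ (fun j => (a j) ^ 2).

(* Main.v *)
Require Import Defs.
From Stdlib Require Import Reals ZArith.
From Coquelicot Require Import Coquelicot.
From Stdlib Require Import Lra Lia Psatz FunctionalExtensionality.
Open Scope R_scope.

Definition summ (f : seqZ) : Prop :=
  ex_series (fun n : nat => f (Z.of_nat n)) /\
  ex_series (fun n : nat => f (- Z.of_nat n - 1)%Z).

Lemma exs_plus (u v : nat -> R) : ex_series u -> ex_series v ->
  ex_series (fun n => u n + v n).
Proof. intros; apply (ex_series_plus u v); auto. Qed.

Lemma exs_scal (c : R) (u : nat -> R) : ex_series u -> ex_series (fun n => c * u n).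
Proof. intros; apply (ex_series_scal_l c u); auto. Qed.

Lemma summ_plus f g : summ f -> summ g -> summ (fun j => f j + g j).
Proof. intros [] []; split; apply exs_plus; auto. Qed.

Lemma summ_scal c f : summ f -> summ (fun j => c * f j).
Proof. intros []; split; apply exs_scal; auto. Qed.

Lemma summ_le f g : (forall j, Rabs (f j) <= g j) -> summ g -> summ f.
Proof. intros H [] ; split.
  - apply (ex_series_le (fun n => f (Z.of_nat n)) (fun n => g (Z.of_nat n))); auto.
  - apply (ex_series_le (fun n => f (- Z.of_nat n - 1)%Z) (fun n => g (- Z.of_nat n - 1)%Z)); auto.
Qed.

Lemma summ_ext f g : (forall j, f j = g j) -> summ f -> summ g.
Proof. intros H [] ; split.
  - apply (ex_series_ext (fun n => f (Z.of_nat n))); auto.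
  - apply (ex_series_ext (fun n => f (- Z.of_nat n - 1)%Z)); auto.
Qed.

Lemma summ_shift1 f : summ f -> summ (fun j => f (j + 1)%Z).
Proof.
  intros [H1 H2]; split.
  - apply ex_series_incr_1 in H1.
    eapply ex_series_ext; [|exact H1]; intro n; simpl. f_equal; lia.
  - assert (Hb : ex_series (fun n : nat => f (- Z.of_nat n)%Z)).
    { apply (proj2 (ex_series_incr_1 _)).
      eapply ex_series_ext; [|exact H2]; intro n; simpl. f_equal; lia. }
    eapply ex_series_ext; [|exact Hb]; intro n; simpl. f_equal; lia.
Qed.

Lemma summ_shiftm1 f : summ f -> summ (fun j => f (j - 1)%Z).
Proof.
  intros [H1 H2]; split.
  - apply (proj2 (ex_series_incr_1 _)).
    eapply ex_series_ext; [|exact H1]; intro n; cbv beta; rewrite ?Nat2Z.inj_succ. f_equal; lia.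
  - apply ex_series_incr_1 in H2.
    eapply ex_series_ext; [|exact H2]; intro n; cbv beta; rewrite ?Nat2Z.inj_succ. f_equal; lia.
Qed.

Lemma sumZ_plus f g : summ f -> summ g -> sumZ (fun j => f j + g j) = sumZ f + sumZ g.
Proof.
  intros [] []; unfold sumZ.
  rewrite (Series_plus (fun n => f (Z.of_nat n)) (fun n => g (Z.of_nat n))) by auto.
  rewrite (Series_plus (fun n => f (- Z.of_nat n - 1)%Z) (fun n => g (- Z.of_nat n - 1)%Z)) by auto.
  ring.
Qed.

Lemma sumZ_scal c f : sumZ (fun j => c * f j) = c * sumZ f.
Proof.
  unfold sumZ.
  rewrite (Series_scal_l c (fun n => f (Z.of_nat n))).
  rewrite (Series_scal_l c (fun n => f (- Z.of_nat n - 1)%Z)). ring.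
Qed.

Lemma sumZ_nonneg f : (forall j, 0 <= f j) -> sumZ f >= 0 -> True.
Proof. auto. Qed.

Lemma Series_nonneg (u : nat -> R) : (forall n, 0 <= u n) -> ex_series u -> 0 <= Series u.
Proof.
  intros H E.
  assert (Series (fun n => 0 * u n) <= Series u).
  { apply Series_le; auto. intro n; specialize (H n); split; lra. }
  rewrite Series_scal_l, Rmult_0_l in H0; auto.
Qed.

Lemma sumZ_ge0 f : (forall j, 0 <= f j) -> summ f -> 0 <= sumZ f.
Proof.
  intros H [E1 E2]; unfold sumZ.
  pose proof (Series_nonneg _ (fun n => H _) E1).
  pose proof (Series_nonneg _ (fun n => H _) E2). lra.
Qed.

Lemma sumZ_shift1 f : summ f -> sumZ (fun j => f (j + 1)%Z) = sumZ f.
Proof.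
  intros [H1 H2]; unfold sumZ.
  assert (Hb : ex_series (fun n : nat => f (- Z.of_nat n)%Z)).
  { apply (proj2 (ex_series_incr_1 _)).
    eapply ex_series_ext; [|exact H2]; intro n; simpl. f_equal; lia. }
  rewrite (Series_incr_1 (fun n => f (Z.of_nat n))) by auto.
  rewrite (Series_ext (fun n => f (- Z.of_nat n - 1 + 1)%Z) (fun n => f (- Z.of_nat n)%Z))
    by (intro; f_equal; lia).
  rewrite (Series_incr_1 (fun n => f (- Z.of_nat n)%Z)) by auto.
  rewrite (Series_ext (fun n => f (Z.of_nat n + 1)%Z) (fun k => f (Z.of_nat (S k))))
    by (intro; f_equal; lia).
  rewrite (Series_ext (fun k => f (- Z.of_nat (S k))%Z) (fun n => f (- Z.of_nat n - 1)%Z))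
    by (intro; f_equal; lia).
  simpl. ring.
Qed.

Lemma sumZ_tele c h : summ h -> sumZ (fun j => c * (h (j + 1)%Z - h j)) = 0.
Proof.
  intros H. rewrite sumZ_scal.
  replace (sumZ (fun j => h (j + 1)%Z - h j)) with (sumZ (fun j => h (j+1)%Z + -1 * h j))
    by (f_equal; apply functional_extensionality; intro; ring).
  rewrite (sumZ_plus (fun j => h (j+1)%Z) (fun j => -1 * h j)).
  - rewrite sumZ_scal, sumZ_shift1 by auto. ring.
  - apply summ_shift1; auto.
  - apply summ_scal; auto.
Qed.
Lemma key (x0 x1 x2 x3 dx dt m c : R) : 0 < dx -> 0 < dt -> 0 <= m -> c <= m ->
  2 * dt * x1 * ((x3 - 3*x2 + 3*x1 - x0)/dx^3) - c * dt * ((x3 - 3*x2 + 3*x1 - x0)/dx^3)^2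
  >= dt * (dx - 4*m/dx^2) * ((x2 - 2*x1 + x0)/dx^2)^2
     + 2*dt/dx^3 * ((x1*x3 - x1*x2 - /2*(x2^2 - x1^2)) - (x0*x2 - x0*x1 - /2*(x1^2 - x0^2)))
     + (-2*dt*m/dx^2) * (((x3 - 2*x2 + x1)/dx^2)^2 - ((x2 - 2*x1 + x0)/dx^2)^2).
Proof.
  intros Hdx Hdt Hm Hc.
  set (w0 := (x2 - 2*x1 + x0)/dx^2). set (w1 := (x3 - 2*x2 + x1)/dx^2).
  assert (E : 2 * dt * x1 * ((x3 - 3*x2 + 3*x1 - x0)/dx^3) - c * dt * ((x3 - 3*x2 + 3*x1 - x0)/dx^3)^2
   - (dt * (dx - 4*m/dx^2) * w0^2
     + 2*dt/dx^3 * ((x1*x3 - x1*x2 - /2*(x2^2 - x1^2)) - (x0*x2 - x0*x1 - /2*(x1^2 - x0^2)))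
     + (-2*dt*m/dx^2) * (w1^2 - w0^2))
   = dt / dx^2 * (2*m*(w1^2+w0^2) - c*(w1-w0)^2)).
  { unfold w0, w1. field. lra. }
  assert (0 <= dt / dx^2 * (2*m*(w1^2+w0^2) - c*(w1-w0)^2)).
  { assert (0 < dx^2) by (apply pow_lt; lra).
    apply Rmult_le_pos. apply Rlt_le. unfold Rdiv. apply Rmult_lt_0_compat; [lra| apply Rinv_0_lt_compat; lra].
    clearbody w0 w1. pose proof (pow2_ge_0 (w1-w0)). pose proof (pow2_ge_0 w1). pose proof (pow2_ge_0 w0).
    assert (c*(w1-w0)^2 <= m*(w1-w0)^2) by (apply Rmult_le_compat_r; lra).
    assert (2*(w1^2+w0^2) - (w1-w0)^2 = (w1+w0)^2) by ring.
    pose proof (pow2_ge_0 (w1+w0)).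
    assert (m*(w1-w0)^2 <= m*(2*(w1^2+w0^2))) by (apply Rmult_le_compat_l; lra). lra. }
  lra.
Qed.
Lemma sumZ_ext f g : (forall j, f j = g j) -> sumZ f = sumZ g.
Proof. intros H; f_equal; apply functional_extensionality; auto. Qed.

Definition l2 (f : seqZ) := summ (fun j => f j ^ 2).

Lemma l2_ext f g : (forall j, f j = g j) -> l2 f -> l2 g.
Proof. intros H; apply summ_ext; intro j; rewrite H; auto. Qed.

Lemma l2_plus f g : l2 f -> l2 g -> l2 (fun j => f j + g j).
Proof.
  intros Hf Hg; apply (summ_le _ (fun j => 2 * f j ^ 2 + 2 * g j ^ 2)).
  - intro j. rewrite Rabs_right by (apply Rle_ge, pow2_ge_0).
    pose proof (pow2_ge_0 (f j - g j)). nra.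
  - apply summ_plus; apply summ_scal; auto.
Qed.

Lemma l2_scal c f : l2 f -> l2 (fun j => c * f j).
Proof.
  intros Hf; apply (summ_ext (fun j => c^2 * f j ^ 2)); [intro; ring|].
  apply summ_scal; auto.
Qed.

Lemma l2_prod f g : l2 f -> l2 g -> summ (fun j => f j * g j).
Proof.
  intros Hf Hg; apply (summ_le _ (fun j => f j ^ 2 + g j ^ 2)).
  - intro j. pose proof (pow2_ge_0 (f j - g j)). pose proof (pow2_ge_0 (f j + g j)).
    apply Rabs_le; split; nra.
  - apply summ_plus; auto.
Qed.

Lemma l2_shift1 f : l2 f -> l2 (fun j => f (j + 1)%Z).
Proof. intros H; apply (summ_shift1 _ H). Qed.

Lemma l2_shiftm1 f : l2 f -> l2 (fun j => f (j - 1)%Z).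
Proof. intros H; apply (summ_shiftm1 _ H). Qed.

Theorem proposition5 (theta dt dx : R) (a : seqZ) :
  0 <= theta <= 1 -> 0 < dt -> 0 < dx ->
  dt * (1 - 2 * theta) <= dx ^ 3 / 4 ->
  in_l2 a ->
  norm2_l2 dx (Aop (- (1 - theta)) dt dx a) <= norm2_l2 dx (Aop theta dt dx a).
Proof.
  intros Hth Hdt Hdx Hcfl Ha.
  assert (la : l2 a) by exact Ha.
  assert (lp1 : l2 (fun j => a (j + 1)%Z)) by (apply l2_shift1; auto).
  assert (lp2 : l2 (fun j => a (j + 2)%Z)).
  { apply (l2_ext (fun j => a (j + 1 + 1)%Z)); [intro; f_equal; lia|].
    apply (l2_shift1 (fun j => a (j + 1)%Z)); auto. }
  assert (lm1 : l2 (fun j => a (j - 1)%Z)) by (apply l2_shiftm1; auto).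
  set (L := fun j => (a (j+2)%Z - 3 * a (j+1)%Z + 3 * a j - a (j-1)%Z) / dx^3).
  set (w := fun j => (a (j+1)%Z - 2 * a j + a (j-1)%Z) / dx^2).
  set (h := fun j => a (j-1)%Z * a (j+1)%Z - a (j-1)%Z * a j - /2 * (a j ^ 2 - a (j-1)%Z ^ 2)).
  assert (HL : forall j, Dp dx (Dp dx (Dm dx a)) j = L j).
  { intro j. unfold Dp, Dm, L.
    replace (j + 1 + 1 - 1)%Z with (j + 1)%Z by lia.
    replace (j + 1 + 1)%Z with (j + 2)%Z by lia.
    replace (j + 1 - 1)%Z with j by lia.
    field. lra. }
  assert (lL : l2 L).
  { apply (l2_ext (fun j => /dx^3 * (a (j+2)%Z + (-3) * a (j+1)%Z + 3 * a j + (-1) * a (j-1)%Z))).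
    { intro; unfold L; field; lra. }
    apply l2_scal. repeat apply l2_plus; try apply l2_scal; auto. }
  assert (lw : l2 w).
  { apply (l2_ext (fun j => /dx^2 * (a (j+1)%Z + (-2) * a j + a (j-1)%Z))).
    { intro; unfold w; field; lra. }
    apply l2_scal. repeat apply l2_plus; try apply l2_scal; auto. }
  assert (sh : summ h).
  { apply (summ_ext (fun j => a (j-1)%Z * a (j+1)%Z + (-1) * (a (j-1)%Z * a j)
             + (-/2) * (a j * a j) + /2 * (a (j-1)%Z * a (j-1)%Z))).
    { intro; unfold h; ring. }
    repeat apply summ_plus; try apply summ_scal; apply l2_prod; auto. }
  set (c := dt * (1 - 2 * theta)).
  set (m := Rmax 0 c).
  assert (Hm0 : 0 <= m) by apply Rmax_l.
  assert (Hcm : c <= m) by apply Rmax_r.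
  assert (Hm4 : m <= dx^3/4).
  { unfold m. apply Rmax_lub; [|exact Hcfl]. pose proof (pow_lt dx 3 Hdx). lra. }
  set (A := Aop theta dt dx a). set (B := Aop (- (1 - theta)) dt dx a).
  assert (HA : forall j, A j = a j + theta * dt * L j).
  { intro j; unfold A, Aop; rewrite HL; auto. }
  assert (HB : forall j, B j = a j + (- (1 - theta)) * dt * L j).
  { intro j; unfold B, Aop; rewrite HL; auto. }
  assert (lA : l2 A).
  { apply (l2_ext (fun j => a j + (theta * dt) * L j)); [intro; rewrite HA; ring|].
    apply l2_plus; [|apply l2_scal]; auto. }
  assert (lB : l2 B).
  { apply (l2_ext (fun j => a j + ((- (1 - theta)) * dt) * L j)); [intro; rewrite HB; ring|].
    apply l2_plus; [|apply l2_scal]; auto. }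
  set (g := fun j => A j ^ 2 + (-1) * B j ^ 2).
  assert (sg : summ g) by (apply summ_plus; [|apply summ_scal]; auto).
  set (al := dt * (dx - 4 * m / dx^2)).
  set (F := fun j => al * w j ^ 2 + (2 * dt / dx^3) * (h (j+1)%Z - h j)
                      + (-2 * dt * m / dx^2) * (w (j+1)%Z ^ 2 - w j ^ 2)).
  assert (stele : forall k q, summ q -> summ (fun j => k * (q (j+1)%Z - q j))).
  { intros k q Hq. apply summ_scal.
    apply (summ_ext (fun j => q (j+1)%Z + (-1) * q j)); [intro; ring|].
    apply summ_plus; [apply summ_shift1|apply summ_scal]; auto. }
  assert (sF : summ F).
  { unfold F. repeat apply summ_plus.
    - apply summ_scal; auto.
    - apply (stele _ h); auto.
    - apply (stele _ (fun j => w j ^ 2)); auto. }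
  assert (SF : sumZ F = al * sumZ (fun j => w j ^ 2)).
  { unfold F.
    rewrite sumZ_plus; [| apply summ_plus; [apply summ_scal; auto | apply (stele _ h); auto]
                        | apply (stele _ (fun j => w j ^ 2)); auto].
    rewrite sumZ_plus; [| apply summ_scal; auto | apply (stele _ h); auto].
    rewrite sumZ_scal, (sumZ_tele _ h sh), (sumZ_tele _ (fun j => w j ^ 2) lw). ring. }
  assert (Hal : 0 <= al).
  { unfold al. apply Rmult_le_pos; [lra|].
    assert (0 < dx^2) by (apply pow_lt; lra).
    assert (4 * m / dx^2 <= dx).
    { apply (Rmult_le_reg_r (dx^2)); auto. unfold Rdiv. rewrite Rmult_assoc, Rinv_l by lra.
      replace (dx * dx^2) with (dx^3) by ring. lra. }
    lra. }
  assert (Hw : 0 <= sumZ (fun j => w j ^ 2)) by (apply sumZ_ge0; auto; intro; apply pow2_ge_0).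
  assert (HgF : forall j, 0 <= g j + (-1) * F j).
  { intro j. unfold g, F. rewrite HA, HB.
    pose proof (key (a (j-1)%Z) (a j) (a (j+1)%Z) (a (j+2)%Z) dx dt m c Hdx Hdt Hm0 Hcm) as K.
    unfold h, w, L.
    replace (j + 1 - 1)%Z with j by lia.
    replace (j + 1 + 1)%Z with (j + 2)%Z by lia.
    unfold c in K |- *.
    assert (E : forall x y : R, (x + theta * dt * y) ^ 2 + -1 * (x + - (1 - theta) * dt * y) ^ 2
               = 2 * dt * x * y - dt * (1 - 2 * theta) * dt * y ^ 2) by (intros; ring).
    rewrite E. unfold al. lra. }
  assert (SgF : 0 <= sumZ (fun j => g j + (-1) * F j)).
  { apply sumZ_ge0; auto. apply summ_plus; [|apply summ_scal]; auto. }
  rewrite sumZ_plus in SgF by (auto; apply summ_scal; auto).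
  rewrite sumZ_scal in SgF.
  unfold g in SgF. rewrite sumZ_plus in SgF by (auto; apply summ_scal; auto).
  rewrite sumZ_scal in SgF.
  unfold norm2_l2. fold A B.
  assert (0 <= al * sumZ (fun j => w j ^ 2)) by (apply Rmult_le_pos; auto).
  apply Rmult_le_compat_l; lra.
Qed.
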